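(* Let $B$ be a unital $C^*$-algebra with a $*$-isomorphism $\psi:B\to M_n\otimes B$ satisfying $\psi(1)=I_n\otimes1$, let $A$ be a maximal abelian $*$-subalgebra of $B$, and let $\phi:A\to\mathbb{C}$ be a unital algebra homomorphism extended to a positive contraction $\phi:B\to\mathbb{C}$. If $\sigma_2(A)\subset A$, then $(\mathrm{id}\otimes e_{ij}\otimes\mathrm{id}^{\otimes(m-1)})(\phi_{m+1}(A))\subset\phi_m(A)$ for all $m\ge1$ and $1\le i,j\le n$.
   Context: $M_n=M_n(\mathbb{C})$, matrix units $E_{kl}$, identity $I_n$. Define $\psi_0=\mathrm{id}_B$, $\psi_{m+1}=(\mathrm{id}^{\otimes m}\otimes\psi)\circ\psi_m:B\to M_n^{\otimes(m+1)}\otimes B$. With $f(b)=I_n\otimes b$, $\sigma_2=\psi_2^{-1}\circ(\mathrm{id}\otimes f)\circ\psi_1:B\to B$. For $m\ge1$, $\phi_m=(\mathrm{id}^{\otimes m}\otimes\phi)\circ\psi_m:B\to M_n^{\otimes m}$. $e_{ij}:M_n\to\mathbb{C}$ is the linear functional $e_{ij}(E_{kl})=\delta_{ik}\delta_{jl}$, and $\mathrm{id}\otimes e_{ij}\otimes\mathrm{id}^{\otimes(m-1)}:M_n^{\otimes(m+1)}\to M_n^{\otimes m}$ applies $e_{ij}$ to the second tensor factor. *)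

(* Defs.v *)
From mathcomp Require Import all_boot all_algebra.
From mathcomp Require Import reals.
From mathcomp.real_closed Require Import complex.
Import GRing.Theory Num.Theory.

Set Implicit Arguments.
Unset Strict Implicit.
Unset Printing Implicit Defensive.

Local Open Scope ring_scope.
Local Open Scope complex_scope.

Section Cstar.
Variable R : realType.
Local Notation C := (R[i]).
Variable B : algType C.

Definition is_unital_Cstar_algebra (star : B -> B) (nrm : B -> R) : Prop :=
  [/\ (forall x, star (star x) = x) /\
      (forall x y, star (x + y) = star x + star y) /\
      (forall (c : C) x, star (c *: x) = c^* *: star x) /\
      (forall x y, star (x * y) = star y * star x),
      (forall x, 0 <= nrm x) /\ (forall x, nrm x = 0 -> x = 0),
      (forall x y, nrm (x + y) <= nrm x + nrm y) /\
      (forall (c : C) x, (nrm (c *: x))%:C = `|c| * (nrm x)%:C),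
      (forall x y, nrm (x * y) <= nrm x * nrm y) /\
      (forall x, nrm (star x * x) = nrm x ^+ 2)
    & (forall u : nat -> B,
        (forall e : R, 0 < e -> exists N, forall p q, (N <= p)%N -> (N <= q)%N ->
                                      nrm (u p - u q) < e) ->
        exists l : B, forall e : R, 0 < e -> exists N, forall p, (N <= p)%N ->
                                      nrm (u p - l) < e)].

Definition invertible (x : B) : Prop := exists y : B, y * x = 1 /\ x * y = 1.

(** Positive element: self-adjoint with spectrum in [0, +oo). *)
Definition positive_elt (star : B -> B) (b : B) : Prop :=
  star b = b /\ forall l : C, ~ invertible (b - l%:A) -> 0 <= l.

Definition star_subalgebra (star : B -> B) (A : B -> Prop) : Prop :=
  [/\ A 0,
      (forall x y, A x -> A y -> A (x + y)),
      (forall (c : C) x, A x -> A (c *: x)),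
      (forall x y, A x -> A y -> A (x * y))
    & (forall x, A x -> A (star x))].

Definition abelian_set (A : B -> Prop) : Prop :=
  forall x y, A x -> A y -> x * y = y * x.

Definition maximal_abelian_star_subalgebra (star : B -> B) (A : B -> Prop) :=
  [/\ star_subalgebra star A, abelian_set A &
      forall A' : B -> Prop, star_subalgebra star A' -> abelian_set A' ->
        (forall x, A x -> A' x) -> forall x, A' x -> A x].

Definition positive_contraction (star : B -> B) (nrm : B -> R) (phi : B -> C) :=
  [/\ (forall (c : C) x y, phi (c *: x + y) = c * phi x + phi y),
      (forall b, positive_elt star b -> 0 <= phi b)
    & (forall b, `|phi b| <= (nrm b)%:C)].

Definition unital_hom_on (A : B -> Prop) (phi : B -> C) :=
  phi 1 = 1 /\ forall x y, A x -> A y -> phi (x * y) = phi x * phi y.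

(** *-isomorphism psi : B -> M_n (x) B = M_n(B) (matrices over B, with the
    conjugate-transpose involution), unital. *)
Definition star_iso (n : nat) (star : B -> B) (psi : B -> 'M[B]_n) :=
  [/\ (forall (c : C) x y i j, psi (c *: x + y) i j = c *: psi x i j + psi y i j),
      (forall x y, psi (x * y) = psi x *m psi y),
      (forall x i j, psi (star x) i j = star (psi x j i))
    & bijective psi].

End Cstar.

(** An element of M_n^{(x) m} (x) X is represented by its matrix entries,
    indexed by multi-indices k, l : 'I_m -> 'I_n (the k-th coordinate is the
    row index in the (k+1)-th tensor factor M_n). *)
Section Tensors.
Variable n : nat.

Definition tens (X : Type) (m : nat) := ('I_m -> 'I_n) -> ('I_m -> 'I_n) -> X.

Definition minit m (k : 'I_m.+1 -> 'I_n) : 'I_m -> 'I_n :=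
  fun p => k (widen_ord (leqnSn m) p).
Definition mlast m (k : 'I_m.+1 -> 'I_n) : 'I_n := k ord_max.

(** psi_0 = id, psi_{m+1} = (id^{(x)m} (x) psi) o psi_m *)
Fixpoint psi_iter (X : Type) (psi : X -> 'M[X]_n) (m : nat) : X -> tens X m :=
  match m return X -> tens X m with
  | 0 => fun b _ _ => b
  | m'.+1 => fun b k l =>
      psi (@psi_iter X psi m' b (@minit m' k) (@minit m' l)) (@mlast m' k) (@mlast m' l)
  end.

(** (id (x) f) : M_n (x) B -> M_n (x) M_n (x) B with f(b) = I_n (x) b *)
Definition id_tens_f (X : nzRingType) (x : tens X 1) : tens X 2 :=
  fun k l => if mlast k == mlast l then x (minit k) (minit l) else 0.

Definition phi_iter (X Y : Type) (psi : X -> 'M[X]_n) (phi : X -> Y) (m : nat)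
  (b : X) : tens Y m := fun k l => phi (@psi_iter X psi m b k l).

Definition ins_second m (i : 'I_n) (k : 'I_m -> 'I_n) : 'I_m.+1 -> 'I_n :=
  fun p => if unlift (inord 1 : 'I_m.+1) p is Some q then k q else i.

(** id (x) e_ij (x) id^{(x)(m-1)} : M_n^{(x)(m+1)} -> M_n^{(x)m}, m >= 1 *)
Definition slice_second (Y : Type) m (i j : 'I_n) (x : tens Y m.+1) : tens Y m :=
  fun k l => x (ins_second i k) (ins_second j l).

End Tensors.

Arguments psi_iter {n X} psi m _ _ _.
Arguments phi_iter {n X Y} psi phi m _ _ _.

(* Main.v *)
Require Import Defs.
From mathcomp Require Import all_boot all_algebra.
From mathcomp Require Import reals.
From mathcomp.real_closed Require Import complex.
Import GRing.Theory Num.Theory.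
Local Open Scope ring_scope.
Local Open Scope complex_scope.

Section Masa.
Variables (R : realType) (B : algType R[i]) (star : B -> B) (A : B -> Prop).
Hypothesis starK : forall x, star (star x) = x.
Hypothesis starD : forall x y, star (x + y) = star x + star y.
Hypothesis starZ : forall (c : R[i]) x, star (c *: x) = c^* *: star x.
Hypothesis starM : forall x y, star (x * y) = star y * star x.
Hypothesis HA : maximal_abelian_star_subalgebra star A.

Lemma conj_i : Num.conj ('i : R[i]) = - 'i.
Proof. exact: conjCi. Qed.
Lemma mul_ii : ('i : R[i]) * 'i = -1.
Proof. by apply/eqP; rewrite eq_complex /= !mul0r !mulr0 mul1r sub0r addr0 oppr0 !eqxx. Qed.

Lemma masa_comm_end (x : B) : A (x + star x) -> A ('i *: (x - star x)) -> A x.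
Proof.
move=> Ah Ak; case: HA => Hsub _ _; have [A0 AD AZ AM AS] := Hsub.
have E : (2%:R : R[i])^-1 *: ((x + star x) + (- 'i) *: ('i *: (x - star x))) = x.
  have sA : forall (a b : R[i]) (v : B), a *: (b *: v) = (a * b) *: v by move=> a b v; exact: scalerA.
  rewrite sA mulNr mul_ii opprK scale1r addrACA subrr addr0.
  have s2 : x *+ 2 = (2%:R : R[i]) *: x by rewrite scaler_nat.
  rewrite -mulr2n s2 sA mulVf ?scale1r //.
  by rewrite pnatr_eq0.
by rewrite -E; apply: (AZ); apply: (AD) => //; apply: (AZ).
Qed.

Lemma masa_sa (h : B) : star h = h -> (forall b, A b -> h * b = b * h) -> A h.
Proof.
move=> sh hc; case: HA => Hsub Hab Hmax.
have [A0 AD AZ AM AS] := Hsub.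
have sAl : forall (c : R[i]) (u v : B), c *: (u * v) = (c *: u) * v by move=> *; exact: scalerAl.
have sAr : forall (c : R[i]) (u v : B), c *: (u * v) = u * (c *: v) by move=> *; exact: scalerAr.
pose T t := A t \/ t = h.
have TS : forall t, T t -> T (star t).
  by move=> t [At|->]; [left; apply: AS|right].
have TT : forall t t', T t -> T t' -> t * t' = t' * t.
  move=> t t' [At|->] [At'|->] //; [exact: Hab| exact/esym/hc|exact: hc].
pose T1 z := forall t, T t -> z * t = t * z.
pose T2 y := forall z, T1 z -> y * z = z * y.
have T1S : forall z, T1 z -> T1 (star z).
  move=> z Hz t Tt; have := Hz _ (TS _ Tt).
  by move/(congr1 star); rewrite !starM starK => ->.
apply: (Hmax T2).
- split.
  + by move=> z _; rewrite mul0r mulr0.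
  + by move=> x y Hx Hy z Hz; rewrite mulrDl mulrDr Hx // Hy.
  + by move=> c x Hx z Hz; rewrite -sAl -sAr Hx.
  + by move=> x y Hx Hy z Hz; rewrite -mulrA Hy // mulrA Hx // mulrA.
  + move=> y Hy z Hz; rewrite -[z]starK -starM -Hy ?starM //.
    exact: T1S.
- move=> y w Hy Hw; apply: Hy => t Tt; apply: Hw => t' Tt'; exact: TT.
- by move=> x Ax z Hz; apply/esym/Hz; left.
- move=> z Hz; apply/esym/Hz; by right.
Qed.

Lemma masa_comm (x : B) : (forall b, A b -> x * b = b * x) -> A x.
Proof.
move=> xc; case: HA => Hsub Hab Hmax.
have [A0 AD AZ AM AS] := Hsub.
have sAl : forall (c : R[i]) (u v : B), c *: (u * v) = (c *: u) * v by move=> *; exact: scalerAl.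
have sAr : forall (c : R[i]) (u v : B), c *: (u * v) = u * (c *: v) by move=> *; exact: scalerAr.
have sN : forall (c : R[i]) (u : B), (- c) *: u = - (c *: u) by move=> *; exact: scaleNr.
have sNr : forall (c : R[i]) (u : B), c *: (- u) = - (c *: u) by move=> *; exact: scalerN.
have xsc : forall b, A b -> star x * b = b * star x.
  move=> b Ab; have := xc _ (AS _ Ab); move/(congr1 star).
  by rewrite !starM starK => ->.
have st0 : star 0 = 0.
  have h := starD 0 0; rewrite addr0 in h.
  by apply: (addrI (star 0)); rewrite -h addr0.
have starN : forall y, star (- y) = - star y.
  by move=> y; apply: (addrI (star y)); rewrite -starD !subrr st0.
apply: masa_comm_end.
  apply: masa_sa; first by rewrite starD starK addrC.
  by move=> b Ab; rewrite mulrDl mulrDr xc // xsc.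
apply: masa_sa.
  by rewrite starZ starD starN starK conj_i sN -sNr opprB.
by move=> b Ab; rewrite -sAl -sAr mulrBl mulrBr xc // xsc.
Qed.
End Masa.
Section Idx.
Variable n : nat.

Lemma ins_some m (i : 'I_n) (k : 'I_m -> 'I_n) (p : 'I_m.+1) (q : 'I_m) :
  (1 <= m)%N -> val p = bump 1 (val q) -> ins_second i k p = k q.
Proof.
move=> m1 Hp; rewrite /ins_second; case: unliftP => [q' Eq|Eq].
- congr k; apply: val_inj; move: Hp; rewrite Eq /= inordK ?ltnS //.
  by move/(congr1 (unbump 1)); rewrite !bumpK.
- have := neq_bump 1 (val q); move: Hp; rewrite Eq /= inordK ?ltnS // => <-.
  by rewrite eqxx.
Qed.

Lemma ins_none m (i : 'I_n) (k : 'I_m -> 'I_n) (p : 'I_m.+1) :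
  (1 <= m)%N -> val p = 1%N -> ins_second i k p = i.
Proof.
move=> m1 Hp; rewrite /ins_second; case: unliftP => [q' Eq|Eq] //.
have := neq_bump 1 (val q'); move: Hp; rewrite Eq /= inordK ?ltnS // => ->.
by rewrite eqxx.
Qed.

Lemma minit_ins m (i : 'I_n) (k : 'I_m.+2 -> 'I_n) (p : 'I_m.+2) :
  minit (ins_second i k) p = ins_second i (minit k) p.
Proof.
rewrite /minit; case: (unliftP (inord 1) p) => [q ->|->].
- rewrite (@ins_some _ i (minit k) _ q) //; last by rewrite /= inordK.
  by rewrite (@ins_some _ i k _ (widen_ord (leqnSn _) q)) //= inordK.
- by rewrite !ins_none //= inordK.
Qed.

Lemma mlast_ins m (i : 'I_n) (k : 'I_m.+2 -> 'I_n) :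
  mlast (ins_second i k) = mlast k.
Proof. by rewrite /mlast (@ins_some _ i k _ ord_max). Qed.

Lemma psi_iter_ext (X : Type) (psi : X -> 'M[X]_n) m b (k k' l l' : 'I_m -> 'I_n) :
  (forall p, k p = k' p) -> (forall p, l p = l' p) ->
  psi_iter psi m b k l = psi_iter psi m b k' l'.
Proof.
elim: m k k' l l' => [//|m IH] k k' l l' Hk Hl /=.
rewrite /mlast Hk Hl; congr (psi _ _ _).
by apply: IH => p; rewrite /minit.
Qed.

Lemma psi_iter_S (X : Type) (psi : X -> 'M[X]_n) m b k l :
  psi_iter psi m.+1 b k l = psi (psi_iter psi m b (minit k) (minit l)) (mlast k) (mlast l).
Proof. by []. Qed.

Lemma psi_iter_ins (X : Type) (psi : X -> 'M[X]_n) (i j : 'I_n) a (t : X)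
  (Ht : psi t = \matrix_(k, l) psi (psi a k l) i j) m :
  (1 <= m)%N -> forall k l,
  psi_iter psi m.+1 a (ins_second i k) (ins_second j l) = psi_iter psi m t k l.
Proof.
case: m => // m _; elim: m => [|m IH] k l.
- rewrite /= /mlast /minit Ht mxE.
  rewrite (@ins_none _ i k ord_max) // (@ins_none _ j l ord_max) //.
  by rewrite (@ins_some _ i k _ ord_max) // (@ins_some _ j l _ ord_max).
- rewrite psi_iter_S [RHS]psi_iter_S !mlast_ins; congr (psi _ _ _).
  rewrite -IH; apply: psi_iter_ext => p; exact: minit_ins.
Qed.
End Idx.

Lemma sum_ifL (K : pzRingType) n (F : 'I_n -> K) (j : 'I_n) (c : K) :
  \sum_(r < n) F r * (if r == j then c else 0) = F j * c.
Proof.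
rewrite (bigD1 j) //= eqxx big1 ?addr0 // => r /negbTE ->; by rewrite mulr0.
Qed.

Lemma sum_ifR (K : pzRingType) n (F : 'I_n -> K) (j : 'I_n) (c : K) :
  \sum_(r < n) (if j == r then c else 0) * F r = c * F j.
Proof.
rewrite (bigD1 j) //= eqxx big1 ?addr0 // => r; rewrite eq_sym => /negbTE ->; by rewrite mul0r.
Qed.

Theorem proposition3p7 (R : realType) (B : algType R[i]) (star : B -> B) (nrm : B -> R)
  (n : nat) (psi : B -> 'M[B]_n) (A : B -> Prop) (phi : B -> R[i]) :
  is_unital_Cstar_algebra star nrm ->
  star_iso star psi ->
  psi 1 = 1%:M ->
  maximal_abelian_star_subalgebra star A ->
  unital_hom_on A phi ->
  positive_contraction star nrm phi ->
  (* sigma_2(A) \subset A, with sigma_2 = psi_2^{-1} o (id (x) f) o psi_1 *)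
  (forall a, A a -> exists a', A a' /\
     forall k l, psi_iter psi 2 a' k l = id_tens_f (psi_iter psi 1 a) k l) ->
  forall m : nat, (1 <= m)%N -> forall i j : 'I_n,
  forall a, A a -> exists a', A a' /\
     forall k l, slice_second i j (phi_iter psi phi m.+1 a) k l = phi_iter psi phi m a' k l.
Proof.
move=> HC [Hlin Hmul Hstar Hbij] Hpsi1 HA Hhom Hpc Hsig m Hm i j a Aa.
case: HC => [[starK [starD [starZ starM]]] _ _ _ _].
case: Hbij => g psiK gK.
pose t := g (\matrix_(k, l) psi (psi a k l) i j).
have Ht : psi t = \matrix_(k, l) psi (psi a k l) i j by rewrite gK.
exists t; split; last first.
  by move=> k l; rewrite /slice_second /phi_iter (@psi_iter_ins _ _ psi i j a t Ht m Hm).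
have psiD : forall x y k l, psi (x + y) k l = psi x k l + psi y k l.
  move=> x y k l; have := Hlin 1 x y k l.
  have s1 : forall u : B, (1 : R[i]) *: u = u by move=> u; exact: scale1r.
  by rewrite !s1.
have psi0 : forall k l, psi 0 k l = 0.
  move=> k l; have h := psiD 0 0 k l; rewrite addr0 in h.
  by apply: (addrI (psi 0 k l)); rewrite -h addr0.
have psi_sum : forall (F : 'I_n -> B) k l,
    psi (\sum_(r < n) F r) k l = \sum_(r < n) psi (F r) k l.
  move=> F k l.
  exact: (big_morph (fun x => psi x k l) (fun x y => psiD x y k l) (psi0 k l)).
have mul2 : forall x y k l k1 l1, psi (psi (x * y) k l) k1 l1 =
    \sum_(r < n) \sum_(r1 < n) psi (psi x k r) k1 r1 * psi (psi y r l) r1 l1.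
  move=> x y k l k1 l1; rewrite Hmul mxE psi_sum; apply: eq_bigr => r _.
  by rewrite Hmul mxE.
apply: (@masa_comm R B star A starK starD starZ starM HA) => b Ab.
have [b' [Ab' Hb']] := Hsig b Ab.
have Hb2 : forall k k1 l l1,
    psi (psi b' k l) k1 l1 = if k1 == l1 then psi b k l else 0.
  move=> k k1 l l1.
  pose K := fun p : 'I_2 => if val p == 0%N then k else k1.
  pose L := fun p : 'I_2 => if val p == 0%N then l else l1.
  by have := Hb' K L; rewrite /id_tens_f /= /mlast /minit /=.
have Hab : a * b' = b' * a by case: HA => _ Hab _; exact: Hab.
apply: (can_inj psiK); apply/matrixP => k l.
rewrite !Hmul !mxE Ht.
transitivity (\sum_(r < n) \sum_(r1 < n) psi (psi a k r) i r1 * psi (psi b' r l) r1 j).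
  apply: eq_bigr => r _.
  transitivity (\sum_(r1 < n) psi (psi a k r) i r1 * (if r1 == j then psi b r l else 0)).
    by rewrite sum_ifL mxE.
  by apply: eq_bigr => r1 _; rewrite Hb2.
rewrite -mul2 Hab mul2.
apply: eq_bigr => r _.
transitivity (\sum_(r1 < n) (if i == r1 then psi b k r else 0) * psi (psi a r l) r1 j).
  by apply: eq_bigr => r1 _; rewrite Hb2.
by rewrite sum_ifR mxE.
Qed.
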